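(* Let $q>0$. If there exists $u\in C^{4}(\mathbb{R}^{2})$, $u>0$, solving $\Delta^{2}u+u^{-q}=0$ in $\mathbb{R}^{2}$, then $q>1$. *)

(* Defs.v *)
From Stdlib Require Import Reals.
From Coquelicot Require Import Coquelicot.
Open Scope R_scope.

Definition dx (f : R -> R -> R) : R -> R -> R :=
  fun x y => Derive (fun t => f t y) x.
Definition dy (f : R -> R -> R) : R -> R -> R :=
  fun x y => Derive (fun t => f x t) y.

Definition cont2 (f : R -> R -> R) : Prop :=
  forall x y, continuous (fun p : R * R => f (fst p) (snd p)) (x, y).

Fixpoint Ck (k : nat) (f : R -> R -> R) : Prop :=
  cont2 f /\
  match k with
  | O => True
  | S k' =>
      (forall x y, ex_derive (fun t => f t y) x /\ ex_derive (fun t => f x t) y)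
      /\ Ck k' (dx f) /\ Ck k' (dy f)
  end.

Definition lap (f : R -> R -> R) : R -> R -> R :=
  fun x y => dx (dx f) x y + dy (dy f) x y.
Definition bilap (f : R -> R -> R) : R -> R -> R := lap (lap f).

(* Main.v *)
Require Import Defs.
From Stdlib Require Import Reals Lra Psatz FunctionalExtensionality.
From Coquelicot Require Import Coquelicot.
Open Scope R_scope.

Lemma isd_plus (f g : R -> R) (x a b : R) : is_derive f x a -> is_derive g x b ->
  is_derive (fun t => f t + g t) x (a + b).
Proof. intros H1 H2. apply is_derive_Reals in H1; apply is_derive_Reals in H2.
apply is_derive_Reals. apply (derivable_pt_lim_plus f g); auto. Qed.

Lemma isd_mult (f g : R -> R) (x a b : R) : is_derive f x a -> is_derive g x b ->
  is_derive (fun t => f t * g t) x (a * g x + f x * b).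
Proof. intros H1 H2. apply is_derive_Reals in H1; apply is_derive_Reals in H2.
apply is_derive_Reals. apply (derivable_pt_lim_mult f g); auto. Qed.

Lemma isd_ext_val (f : R -> R) (x a b : R) : a = b -> is_derive f x a -> is_derive f x b.
Proof. intros ->; auto. Qed.

Lemma isd_id (x : R) : is_derive (fun t => t) x 1.
Proof. apply is_derive_Reals. apply derivable_pt_lim_id. Qed.

Lemma isd_const (c x : R) : is_derive (fun _ => c) x 0.
Proof. apply is_derive_Reals. apply derivable_pt_lim_const. Qed.

Lemma isd_sin (x : R) : is_derive sin x (cos x).
Proof. apply is_derive_Reals. apply derivable_pt_lim_sin. Qed.
Lemma isd_cos (x : R) : is_derive cos x (- sin x).
Proof. apply is_derive_Reals. apply derivable_pt_lim_cos. Qed.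

Lemma isd_tmul (f : R -> R) (x a : R) : is_derive f x a -> is_derive (fun t => t * f t) x (f x + x * a).
Proof. intro H. eapply isd_ext_val; [|apply (isd_mult (fun t => t) f x 1 a (isd_id x) H)]. ring. Qed.

Lemma mono_le (f f' : R -> R) (a b : R) : a <= b ->
  (forall t, a <= t <= b -> is_derive f t (f' t)) ->
  (forall t, a < t < b -> f' t <= 0) -> f b <= f a.
Proof.
intros Hab Hd Hs. destruct (Req_dec a b) as [->|Hne]; [lra|].
destruct (MVT_cor2 f f' a b) as [c [Hc1 Hc2]]; [lra| |].
- intros c Hc. apply is_derive_Reals. auto.
- specialize (Hs c Hc2). nra.
Qed.

Lemma mvt_abs (g : R -> R) (a b : R) : (forall t, ex_derive g t) ->
  exists c, Rabs (c - a) <= Rabs (b - a) /\ g b - g a = Derive g c * (b - a).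
Proof.
intros Hd. destruct (Rtotal_order a b) as [H|[H|H]].
- destruct (MVT_cor2 g (Derive g) a b) as [c [Hc1 Hc2]]; auto.
  + intros c _. apply is_derive_Reals. apply Derive_correct. auto.
  + exists c. split; auto. rewrite !Rabs_pos_eq; lra.
- subst. exists b. split; [rewrite Rminus_diag, Rabs_R0; lra| ring].
- destruct (MVT_cor2 g (Derive g) b a) as [c [Hc1 Hc2]]; auto.
  + intros c _. apply is_derive_Reals. apply Derive_correct. auto.
  + exists c. split.
    * rewrite Rabs_left by lra. rewrite Rabs_left by lra. lra.
    * lra.
Qed.

Lemma Ck_S_cont k f : Ck k f -> cont2 f.
Proof. destruct k; intro H; apply H. Qed.

Lemma Ck_mono k f : Ck (S k) f -> Ck k f.
Proof.
revert f. induction k; intros f H.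
- split; [apply H|exact I].
- destruct H as [H0 [H1 [H2 H3]]]. split; [exact H0|]. split; [exact H1|].
  split; apply IHk; assumption.
Qed.

Lemma cont2_to_2d f x y : cont2 f -> continuity_2d_pt f x y.
Proof. intros H. apply continuity_2d_pt_filterlim. apply H. Qed.

Lemma cont2_plus f g : cont2 f -> cont2 g -> cont2 (fun x y => f x y + g x y).
Proof. intros Hf Hg x y. apply (continuous_plus (fun p : R*R => f (fst p) (snd p)) (fun p : R*R => g (fst p) (snd p))); auto. Qed.

Lemma Ck_plus k f g : Ck k f -> Ck k g -> Ck k (fun x y => f x y + g x y).
Proof.
revert f g. induction k; intros f g Hf Hg.
- split; [|exact I]. apply cont2_plus; [apply Hf|apply Hg].
- destruct Hf as [F0 [F1 [F2 F3]]]; destruct Hg as [G0 [G1 [G2 G3]]].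
  split; [apply cont2_plus; assumption|].
  split; [|split].
  + intros x y; split.
    * apply (ex_derive_plus (fun t => f t y) (fun t => g t y)); [apply (F1 x y)|apply (G1 x y)].
    * apply (ex_derive_plus (fun t => f x t) (fun t => g x t)); [apply (F1 x y)|apply (G1 x y)].
  + replace (dx (fun x y => f x y + g x y)) with (fun x y => dx f x y + dx g x y).
    * apply IHk; assumption.
    * apply functional_extensionality; intro x; apply functional_extensionality; intro y.
      unfold dx. rewrite (Derive_plus (fun t => f t y) (fun t => g t y)); [reflexivity|apply (F1 x y)|apply (G1 x y)].
  + replace (dy (fun x y => f x y + g x y)) with (fun x y => dy f x y + dy g x y).
    * apply IHk; assumption.
    * apply functional_extensionality; intro x; apply functional_extensionality; intro y.
      unfold dy. rewrite (Derive_plus (fun t => f x t) (fun t => g x t)); [reflexivity|apply (F1 x y)|apply (G1 x y)].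
Qed.

Lemma diff_C1 f x y : Ck 1 f -> differentiable_pt_lim f x y (dx f x y) (dy f x y).
Proof.
intros [H0 [H1 [[H2 _] [H3 _]]]] eps.
destruct (cont2_to_2d (dx f) x y H2 (pos_div_2 eps)) as [d1 D1].
destruct (cont2_to_2d (dy f) x y H3 (pos_div_2 eps)) as [d2 D2].
assert (Hd : 0 < Rmin d1 d2) by (apply Rmin_pos; apply cond_pos).
exists (mkposreal _ Hd). intros u v Hu Hv. simpl in Hu, Hv.
assert (Hu1 : Rabs (u - x) < d1) by (eapply Rlt_le_trans; [exact Hu| apply Rmin_l]).
assert (Hv1 : Rabs (v - y) < d1) by (eapply Rlt_le_trans; [exact Hv| apply Rmin_l]).
assert (Hv2 : Rabs (v - y) < d2) by (eapply Rlt_le_trans; [exact Hv| apply Rmin_r]).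
destruct (mvt_abs (fun t => f t v) x u) as [c1 [Hc1 E1]].
{ intro t. apply (H1 t v). }
destruct (mvt_abs (fun t => f x t) y v) as [c2 [Hc2 E2]].
{ intro t. apply (H1 x t). }
assert (A1 : Rabs (dx f c1 v - dx f x y) < eps / 2).
{ apply (D1 c1 v); lra. }
assert (A2 : Rabs (dy f x c2 - dy f x y) < eps / 2).
{ apply (D2 x c2); [rewrite Rminus_diag, Rabs_R0; apply cond_pos|lra]. }
unfold dx, dy in A1, A2.
replace (f u v - f x y - (dx f x y * (u - x) + dy f x y * (v - y)))
  with ((Derive (fun t => f t v) c1 - dx f x y) * (u - x) + (Derive (fun t => f x t) c2 - dy f x y) * (v - y))
  by (unfold dx, dy in *; lra).
eapply Rle_trans; [apply Rabs_triang|]. rewrite !Rabs_mult.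
assert (M1 := Rmax_l (Rabs (u - x)) (Rabs (v - y))).
assert (M2 := Rmax_r (Rabs (u - x)) (Rabs (v - y))).
assert (P1 := Rabs_pos (u - x)). assert (P2 := Rabs_pos (v - y)).
unfold dx, dy. 
assert (eps > 0) by apply cond_pos.
nra.
Qed.

Lemma chain f (X Y : R -> R) t a b : Ck 1 f -> is_derive X t a -> is_derive Y t b ->
  is_derive (fun s => f (X s) (Y s)) t (dx f (X t) (Y t) * a + dy f (X t) (Y t) * b).
Proof.
intros Hf HX HY. apply is_derive_Reals in HX; apply is_derive_Reals in HY.
apply is_derive_Reals. apply derivable_pt_lim_comp_2d; auto.
apply diff_C1; exact Hf.
Qed.

Definition pol (g : R -> R -> R) (r t : R) := g (r * cos t) (r * sin t).

Lemma c2d_cos r t : continuity_2d_pt (fun _ t => cos t) r t.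
Proof. apply (continuity_1d_2d_pt_comp cos (fun _ v => v)). apply continuity_cos. apply continuity_2d_pt_id2. Qed.
Lemma c2d_sin r t : continuity_2d_pt (fun _ t => sin t) r t.
Proof. apply (continuity_1d_2d_pt_comp sin (fun _ v => v)). apply continuity_sin. apply continuity_2d_pt_id2. Qed.

Lemma pol_c2d g r t : cont2 g -> continuity_2d_pt (pol g) r t.
Proof.
intros Hg. apply continuity_2d_pt_filterlim. unfold pol.
apply (continuous_comp_2 (fun p : R*R => fst p * cos (snd p)) (fun p : R*R => fst p * sin (snd p)) g).
- apply (continuity_2d_pt_filterlim (fun u v => u * cos v)).
  apply continuity_2d_pt_mult; [apply continuity_2d_pt_id1|apply c2d_cos].
- apply (continuity_2d_pt_filterlim (fun u v => u * sin v)).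
  apply continuity_2d_pt_mult; [apply continuity_2d_pt_id1|apply c2d_sin].
- apply Hg.
Qed.

Lemma c2d_1d f x y : continuity_2d_pt f x y -> continuous (fun t => f x t) y.
Proof.
intros H. apply continuity_2d_pt_filterlim in H.
apply (continuous_comp_2 (fun _ : R => x) (fun t : R => t) f).
- apply continuous_const.
- apply continuous_id.
- exact H.
Qed.

Lemma RInt_mul_l (f : R -> R) a b r : ex_RInt f a b -> RInt (fun t => r * f t) a b = r * RInt f a b.
Proof. intro H. exact (RInt_scal f a b r H). Qed.
Lemma RInt_sub (f g : R -> R) a b : ex_RInt f a b -> ex_RInt g a b -> RInt (fun t => f t - g t) a b = RInt f a b - RInt g a b.
Proof. intros H H'. exact (RInt_minus f g a b H H'). Qed.
Lemma RInt_add (f g : R -> R) a b : ex_RInt f a b -> ex_RInt g a b -> RInt (fun t => f t + g t) a b = RInt f a b + RInt g a b.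
Proof. intros H H'. exact (RInt_plus f g a b H H'). Qed.
Lemma RInt_cst (c a b : R) : RInt (fun _ => c) a b = (b - a) * c.
Proof. exact (RInt_const a b c). Qed.

Lemma Ck2_parts f : Ck 2 f -> Ck 1 f /\ Ck 1 (dx f) /\ Ck 1 (dy f).
Proof. intros H. split; [apply Ck_mono; exact H|]. destruct H as [_ [_ [H1 H2]]]. split; assumption. Qed.

Lemma Ck1_parts f : Ck 1 f -> cont2 f /\ cont2 (dx f) /\ cont2 (dy f).
Proof. intros [H0 [_ [[H1 _] [H2 _]]]]. repeat split; assumption. Qed.

Definition P1 (f : R -> R -> R) r t := pol (dx f) r t * cos t + pol (dy f) r t * sin t.
Definition P2 (f : R -> R -> R) r t := P1 (dx f) r t * cos t + P1 (dy f) r t * sin t.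
Definition Hh (f : R -> R -> R) r t := - sin t * pol (dx f) r t + cos t * pol (dy f) r t.
Definition Dh (f : R -> R -> R) r t := r * pol (lap f) r t - P1 f r t - r * P2 f r t.
Definition G (g : R -> R -> R) r := RInt (fun t => pol g r t) 0 (2 * PI).

Lemma isd_lin (c r : R) : is_derive (fun z => z * c) r c.
Proof. eapply isd_ext_val; [|apply (isd_mult (fun z => z) (fun _ => c) r 1 0 (isd_id r) (isd_const c r))]. ring. Qed.

Lemma dr_pol f r t : Ck 1 f -> is_derive (fun z => pol f z t) r (P1 f r t).
Proof.
intros Hf. unfold pol, P1.
exact (chain f (fun z => z * cos t) (fun z => z * sin t) r (cos t) (sin t) Hf (isd_lin _ _) (isd_lin _ _)).
Qed.

Lemma dr_P1 f r t : Ck 2 f -> is_derive (fun z => P1 f z t) r (P2 f r t).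
Proof.
intros Hf. destruct (Ck2_parts f Hf) as [_ [H1 H2]]. unfold P1, P2.
apply isd_plus.
- eapply isd_ext_val; [|apply (isd_mult _ _ r _ 0 (dr_pol (dx f) r t H1) (isd_const (cos t) r))]. ring.
- eapply isd_ext_val; [|apply (isd_mult _ _ r _ 0 (dr_pol (dy f) r t H2) (isd_const (sin t) r))]. ring.
Qed.

Lemma alg_id r s c fx fy A Bm Cm Dd : s ^ 2 + c ^ 2 = 1 ->
  (- c) * fx + (- s) * (A * (r * - s) + Bm * (r * c)) + ((- s) * fy + c * (Cm * (r * - s) + Dd * (r * c)))
  = r * (A + Dd) - (fx * c + fy * s) - r * ((A * c + Bm * s) * c + (Cm * c + Dd * s) * s).
Proof. intros H. replace (r * (A + Dd)) with (r * (A + Dd) * (s ^ 2 + c ^ 2)) by (rewrite H; ring). ring. Qed.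

Lemma dt_H f r t : Ck 2 f -> is_derive (fun s => Hh f r s) t (Dh f r t).
Proof.
intros Hf. destruct (Ck2_parts f Hf) as [_ [H1 H2]].
assert (HX : is_derive (fun s => r * cos s) t (r * - sin t)).
{ eapply isd_ext_val; [|apply (isd_mult (fun _ => r) cos t 0 _ (isd_const r t) (isd_cos t))]. ring. }
assert (HY : is_derive (fun s => r * sin s) t (r * cos t)).
{ eapply isd_ext_val; [|apply (isd_mult (fun _ => r) sin t 0 _ (isd_const r t) (isd_sin t))]. ring. }
assert (HN' : is_derive (fun s => - sin s) t (- cos t)).
{ apply (is_derive_ext (fun s => -1 * sin s)); [intro x; change (-1 * sin x = - sin x); ring|].
  eapply isd_ext_val; [|apply (isd_mult (fun _ => -1) sin t 0 _ (isd_const (-1) t) (isd_sin t))]. ring. }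
unfold Hh.
eapply isd_ext_val; [|apply isd_plus; [apply (isd_mult (fun s => - sin s)); [exact HN'|]|apply isd_mult; [apply isd_cos|]]].
2: exact (chain (dx f) (fun s => r * cos s) (fun s => r * sin s) t _ _ H1 HX HY).
2: exact (chain (dy f) (fun s => r * cos s) (fun s => r * sin s) t _ _ H2 HX HY).
unfold Dh, P1, P2, pol, lap.
apply alg_id. rewrite <- (sin2_cos2 t). unfold Rsqr. ring.
Qed.

Lemma c2d_P1 f r t : Ck 1 f -> continuity_2d_pt (P1 f) r t.
Proof.
intros Hf. destruct (Ck1_parts f Hf) as [_ [H1 H2]]. unfold P1.
apply continuity_2d_pt_plus; apply continuity_2d_pt_mult;
  try apply pol_c2d; try assumption; try apply c2d_cos; apply c2d_sin.
Qed.

Lemma c2d_P2 f r t : Ck 2 f -> continuity_2d_pt (P2 f) r t.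
Proof.
intros Hf. destruct (Ck2_parts f Hf) as [_ [H1 H2]]. unfold P2.
apply continuity_2d_pt_plus; apply continuity_2d_pt_mult;
  try (apply c2d_P1; assumption); try apply c2d_cos; apply c2d_sin.
Qed.

Lemma cont2_lap f : Ck 2 f -> cont2 (lap f).
Proof.
intros Hf. destruct (Ck2_parts f Hf) as [_ [H1 H2]].
destruct (Ck1_parts _ H1) as [_ [A1 _]]. destruct (Ck1_parts _ H2) as [_ [_ A2]].
unfold lap. apply cont2_plus; assumption.
Qed.

Lemma c2d_Dh f r t : Ck 2 f -> continuity_2d_pt (Dh f) r t.
Proof.
intros Hf. unfold Dh.
apply continuity_2d_pt_minus; [apply continuity_2d_pt_minus|].
- apply continuity_2d_pt_mult; [apply continuity_2d_pt_id1|apply pol_c2d; apply cont2_lap; exact Hf].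
- apply c2d_P1. apply Ck_mono. exact Hf.
- apply continuity_2d_pt_mult; [apply continuity_2d_pt_id1|apply c2d_P2; exact Hf].
Qed.

Lemma exRInt2 (F : R -> R -> R) r a b : (forall z t, continuity_2d_pt F z t) -> ex_RInt (fun t => F r t) a b.
Proof. intros H. apply (ex_RInt_continuous (V:=R_CompleteNormedModule)). intros z _. apply c2d_1d. apply H. Qed.

Lemma dRInt (F F' : R -> R -> R) r :
  (forall z t, is_derive (fun z => F z t) z (F' z t)) ->
  (forall z t, continuity_2d_pt F' z t) -> (forall z t, continuity_2d_pt F z t) ->
  is_derive (fun z => RInt (fun t => F z t) 0 (2 * PI)) r (RInt (fun t => F' r t) 0 (2 * PI)).
Proof.
intros Hd HF' HF.
eapply isd_ext_val; [|apply (is_derive_RInt_param F 0 (2 * PI) r)].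
- apply RInt_ext. intros t _. apply is_derive_unique. apply Hd.
- apply filter_forall. intros z t _. eexists. apply Hd.
- intros t _. apply (continuity_2d_pt_ext F'); [|apply HF'].
  intros x y. symmetry. apply is_derive_unique. apply Hd.
- apply filter_forall. intros z. apply exRInt2. exact HF.
Qed.

Lemma dG f r : Ck 1 f -> is_derive (G f) r (RInt (fun t => P1 f r t) 0 (2 * PI)).
Proof.
intros Hf. destruct (Ck1_parts f Hf) as [H0 _]. unfold G.
apply (dRInt (pol f) (P1 f)).
- intros z t. apply dr_pol; exact Hf.
- intros; apply c2d_P1; exact Hf.
- intros; apply pol_c2d; exact H0.
Qed.

Lemma dG1 f r : Ck 2 f -> is_derive (fun z => RInt (fun t => P1 f z t) 0 (2 * PI)) r (RInt (fun t => P2 f r t) 0 (2 * PI)).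
Proof.
intros Hf.
apply (dRInt (P1 f) (P2 f)).
- intros z t. apply dr_P1; exact Hf.
- intros; apply c2d_P2; exact Hf.
- intros; apply c2d_P1; apply Ck_mono; exact Hf.
Qed.

Lemma ident f r : Ck 2 f ->
  RInt (fun t => P1 f r t) 0 (2 * PI) + r * RInt (fun t => P2 f r t) 0 (2 * PI) = r * G (lap f) r.
Proof.
intros Hf.
assert (E : RInt (fun t => Dh f r t) 0 (2 * PI) = 0).
{ rewrite (is_RInt_unique _ _ _ _ (is_RInt_derive (fun s => Hh f r s) (fun t => Dh f r t) 0 (2 * PI)
    (fun x _ => dt_H f r x Hf) (fun x _ => c2d_1d _ r x (c2d_Dh f r x Hf)))).
  unfold Hh, pol. rewrite cos_2PI, sin_2PI, cos_0, sin_0. rewrite minus_eq_zero. reflexivity. }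
assert (C1 : forall z t, continuity_2d_pt (P1 f) z t) by (intros; apply c2d_P1; apply Ck_mono; exact Hf).
assert (C2 : forall z t, continuity_2d_pt (P2 f) z t) by (intros; apply c2d_P2; exact Hf).
assert (C3 : forall z t, continuity_2d_pt (pol (lap f)) z t) by (intros; apply pol_c2d; apply cont2_lap; exact Hf).
unfold Dh in E. unfold G.
assert (I1 : ex_RInt (fun t => r * pol (lap f) r t) 0 (2 * PI)).
{ apply (exRInt2 (fun z t => z * pol (lap f) z t)). intros; apply continuity_2d_pt_mult; [apply continuity_2d_pt_id1|apply C3]. }
assert (I2 : ex_RInt (fun t => P1 f r t) 0 (2 * PI)) by (apply exRInt2; exact C1).
assert (I3 : ex_RInt (fun t => r * P2 f r t) 0 (2 * PI)).
{ apply (exRInt2 (fun z t => z * P2 f z t)). intros; apply continuity_2d_pt_mult; [apply continuity_2d_pt_id1|apply C2]. }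
assert (I4 : ex_RInt (fun t => r * pol (lap f) r t - P1 f r t) 0 (2 * PI)).
{ apply (exRInt2 (fun z t => z * pol (lap f) z t - P1 f z t)). intros; apply continuity_2d_pt_minus; [apply continuity_2d_pt_mult; [apply continuity_2d_pt_id1|apply C3]|apply C1]. }
rewrite (RInt_sub _ _ _ _ I4 I3) in E.
rewrite (RInt_sub _ _ _ _ I1 I2) in E.
rewrite (RInt_mul_l (fun t => pol (lap f) r t)) in E by (apply exRInt2; exact C3).
rewrite (RInt_mul_l (fun t => P2 f r t)) in E by (apply exRInt2; exact C2).
lra.
Qed.

Lemma exp_mono_le x y : x <= y -> exp x <= exp y.
Proof. intros [H|H]; [left; apply exp_increasing; exact H| subst; lra]. Qed.
Lemma ln_mono_le x y : 0 < x -> x <= y -> ln x <= ln y.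
Proof. intros Hx [H|H]; [left; apply ln_increasing; lra| subst; lra]. Qed.
Lemma ln_le_sub1 y : 0 < y -> ln y <= y - 1.
Proof. intros Hy. pose proof (exp_ineq1_le (ln y)). rewrite exp_ln in H by exact Hy. lra. Qed.
Lemma Rpower_pos x y : 0 < Rpower x y.
Proof. unfold Rpower. apply exp_pos. Qed.

Lemma Rpower_lower q y B : 0 < q -> q <= 1 -> 0 < y -> y <= B -> 1 <= B -> / B <= Rpower y (- q).
Proof.
intros Hq Hq1 Hy HyB HB. unfold Rpower.
rewrite <- (exp_ln B) by lra. rewrite <- exp_Ropp. apply exp_mono_le.
assert (L1 : ln y <= ln B) by (apply ln_mono_le; lra).
assert (L2 : 0 <= ln B) by (rewrite <- ln_1; apply ln_mono_le; lra).
nra.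
Qed.

Lemma ode (q K L : R) (U U1 W W1 Z : R -> R) :
 0 < q -> q <= 1 -> 0 < K -> 0 < L ->
 (forall r, is_derive U r (U1 r)) ->
 (forall r, is_derive (fun s => s * U1 s) r (r * W r)) ->
 (forall r, is_derive W r (W1 r)) ->
 (forall r, is_derive (fun s => s * W1 s) r (r * Z r)) ->
 (forall r, 0 < U r) ->
 (forall r, Z r <= - K * Rpower (U r / L) (- q)) -> False.
Proof.
intros Hq Hq1 HK HL dU dPU dW dPW Upos HZ.
assert (Zneg : forall r, Z r < 0).
{ intro r. pose proof (Rpower_pos (U r / L) (- q)). specialize (HZ r). nra. }
assert (W1neg : forall r, 0 < r -> W1 r <= 0).
{ intros r Hr.
  assert (H := mono_le (fun s => s * W1 s) (fun s => s * Z s) 0 r ltac:(lra)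
     (fun t _ => dPW t) (fun t Ht => ltac:(pose proof (Zneg t); nra))).
  cbv beta in H. nra. }
assert (Wdec : forall a b, 0 <= a <= b -> W b <= W a).
{ intros a b Hab. apply (mono_le W W1 a b); [lra| intros; apply dW|].
  intros t Ht. apply W1neg. lra. }
assert (Wpos : forall r, 0 <= r -> 0 <= W r).
{ intros r0 Hr0. destruct (Rle_or_lt 0 (W r0)) as [H|H]; [exact H|exfalso].
  set (r1 := r0 + 1).
  set (c := - W r1).
  assert (Hc : 0 < c) by (unfold c, r1; pose proof (Wdec r0 (r0+1) ltac:(lra)); lra).
  assert (Wc : forall s, r1 <= s -> W s <= - c).
  { intros s Hs. unfold c. rewrite Ropp_involutive. apply Wdec. unfold r1 in *; lra. }
  set (Psi := r1 * U1 r1 + c / 2 * (r1 * r1)).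
  assert (S_psi : forall s, r1 <= s -> s * U1 s + c / 2 * (s * s) <= Psi).
  { intros s Hs. apply (mono_le (fun s => s * U1 s + c / 2 * (s * s)) (fun s => s * W s + c * s) r1 s Hs).
    - intros t _. apply isd_plus; [apply dPU|]. auto_derive; [exact I| field].
    - intros t Ht. pose proof (Wc t ltac:(lra)). unfold r1 in *. nra. }
  set (K0 := Rabs Psi).
  assert (HU1 : forall s, r1 <= s -> U1 s <= K0 / s - c * s / 2).
  { intros s Hs. pose proof (S_psi s Hs). pose proof (Rle_abs Psi).
    assert (0 < s) by (unfold r1 in *; lra).
    apply (Rmult_le_reg_l s); [lra|]. unfold K0 in *. field_simplify; [|lra]. nra. }
  set (A0 := U r1 - K0 * ln r1 + c / 4 * (r1 * r1)).
  assert (S_chi : forall s, r1 <= s -> U s - K0 * ln s + c / 4 * (s * s) <= A0).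
  { intros s Hs. apply (mono_le (fun s => U s - K0 * ln s + c / 4 * (s * s)) (fun s => U1 s - K0 / s + c / 2 * s) r1 s Hs).
    - intros t Ht. assert (0 < t) by (unfold r1 in *; lra).
      apply isd_plus; [|auto_derive; [exact I|field]].
      apply (isd_plus U (fun s => - (K0 * ln s)) t (U1 t) (- (K0 / t)) (dU t)).
      auto_derive; [lra|field; lra].
    - intros t Ht. pose proof (HU1 t ltac:(lra)). lra. }
  set (s := r1 + 4 * (K0 + Rabs A0 + 1) / c + 1).
  assert (HK0 : 0 <= K0) by apply Rabs_pos.
  assert (HA0 := Rle_abs A0).
  assert (Hs1 : r1 + 1 <= s).
  { unfold s. assert (0 <= 4 * (K0 + Rabs A0 + 1) / c).
    { apply Rle_mult_inv_pos; [pose proof (Rabs_pos A0); lra | lra]. } lra. }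
  assert (Hs2 : 4 * (K0 + Rabs A0 + 1) <= c * s).
  { unfold s. assert (E : c * (r1 + 4 * (K0 + Rabs A0 + 1) / c + 1) = c * (r1 + 1) + 4 * (K0 + Rabs A0 + 1)) by (field; lra).
    rewrite E. unfold r1 in *. nra. }
  assert (Hr1 : 0 < r1) by (unfold r1; lra).
  pose proof (S_chi s ltac:(lra)).
  pose proof (ln_le_sub1 s ltac:(lra)).
  pose proof (Upos s).
  assert (K0 * ln s <= K0 * s) by nra.
  assert (c / 4 * (s * s) >= s * (K0 + Rabs A0 + 1)) by nra.
  assert (s * Rabs A0 >= Rabs A0) by (pose proof (Rabs_pos A0); nra).
  lra. }
set (w0 := W 0).
assert (Hw0 : 0 <= w0) by (apply Wpos; lra).
assert (HU1b : forall r, 0 < r -> U1 r <= w0 * r / 2).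
{ intros r Hr.
  assert (H := mono_le (fun s => s * U1 s - w0 / 2 * (s * s)) (fun s => s * W s - w0 * s) 0 r ltac:(lra)
    (fun t _ => ltac:(apply (isd_plus (fun s => s * U1 s) (fun s => - (w0 / 2 * (s * s)))); [apply dPU| auto_derive; [exact I| field]]))
    (fun t Ht => ltac:(pose proof (Wdec 0 t ltac:(lra)); unfold w0; nra))).
  cbv beta in H. apply (Rmult_le_reg_l r); [lra|]. nra. }
assert (HUb : forall r, 0 <= r -> U r <= U 0 + w0 / 4 * (r * r)).
{ intros r Hr.
  assert (H := mono_le (fun s => U s - w0 / 4 * (s * s)) (fun s => U1 s - w0 / 2 * s) 0 r Hr
    (fun t _ => ltac:(apply (isd_plus U (fun s => - (w0 / 4 * (s * s)))); [apply dU| auto_derive; [exact I| field]]))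
    (fun t Ht => ltac:(pose proof (HU1b t ltac:(lra)); lra))).
  cbv beta in H. lra. }
set (C := (U 0 + w0) / L + 1).
assert (HC : 1 <= C).
{ unfold C. pose proof (Upos 0). assert (0 <= (U 0 + w0) / L) by (apply Rle_mult_inv_pos; lra). lra. }
assert (HZb : forall r, 0 <= r -> Z r <= - K / (C * (1 + r * r))).
{ intros r Hr.
  assert (HB : 1 <= C * (1 + r * r)) by nra.
  assert (Hy : U r / L <= C * (1 + r * r)).
  { pose proof (HUb r Hr). unfold C.
    assert (E1 : L * (U r / L) = U r) by (field; lra).
    assert (E2 : L * (((U 0 + w0) / L + 1) * (1 + r * r)) = (U 0 + w0) * (1 + r * r) + L * (1 + r * r)) by (field; lra).
    apply (Rmult_le_reg_l L); [lra|]. rewrite E1, E2.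
    pose proof (Upos 0). nra. }
  pose proof (Rpower_lower q (U r / L) (C * (1 + r * r)) Hq Hq1 ltac:(pose proof (Upos r); apply Rdiv_lt_0_compat; lra) Hy HB).
  specialize (HZ r). unfold Rdiv at 1. nra. }
set (a := K / (2 * C)).
assert (Ha : 0 < a) by (unfold a; apply Rdiv_lt_0_compat; lra).
assert (HW1b : forall r, 0 <= r -> r * W1 r <= - a * ln (1 + r * r)).
{ intros r Hr.
  assert (H := mono_le (fun s => s * W1 s + a * ln (1 + s * s)) (fun s => s * Z s + a * (2 * s) / (1 + s * s)) 0 r Hr
    (fun t _ => ltac:(apply isd_plus; [apply dPW| auto_derive; [nra| field; nra]]))
    (fun t Ht => ltac:(cbv beta; pose proof (HZb t ltac:(lra)) as Hz;
        assert (E : a * (2 * t) / (1 + t * t) = t * (K / (C * (1 + t * t)))) by (unfold a; field; split; nra);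
        rewrite E; unfold Rdiv in Hz |- *; nra))).
  cbv beta in H. rewrite Rmult_0_r, Rplus_0_r, ln_1 in H. lra. }
assert (ln5 : 1 <= ln 5).
{ rewrite <- (ln_exp 1). apply ln_mono_le; [apply exp_pos|]. pose proof exp_le_3. lra. }
assert (HW1c : forall r, 2 <= r -> W1 r <= - a / r).
{ intros r Hr. pose proof (HW1b r ltac:(lra)).
  assert (1 <= ln (1 + r * r)) by (eapply Rle_trans; [exact ln5|apply ln_mono_le; nra]).
  apply (Rmult_le_reg_l r); [lra|]. field_simplify; [|lra]. nra. }
set (T := (W 2 + a * ln 2 + 1) / a).
set (s := 2 + exp T).
assert (Hs : 2 <= s) by (unfold s; pose proof (exp_pos T); lra).
assert (HlnS : T < ln s).
{ rewrite <- (ln_exp T) at 1. apply ln_increasing; [apply exp_pos| unfold s; lra]. }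
assert (H := mono_le (fun s => W s + a * ln s) (fun s => W1 s + a / s) 2 s Hs
    (fun t Ht => ltac:(apply isd_plus; [apply dW| auto_derive; [lra| field; lra]]))
    (fun t Ht => ltac:(pose proof (HW1c t ltac:(lra)); lra))).
cbv beta in H.
assert (a * T = W 2 + a * ln 2 + 1) by (unfold T; field; lra).
pose proof (Wpos s ltac:(lra)).
nra.
Qed.

Lemma tangent q x m : 0 < q -> 0 < x -> 0 < m ->
  Rpower m (- q) * (1 + q - q * x / m) <= Rpower x (- q).
Proof.
intros Hq Hx Hm.
assert (E : Rpower x (- q) = Rpower m (- q) * Rpower (x / m) (- q)).
{ rewrite Rpower_mult_distr; [|lra|apply Rdiv_lt_0_compat; lra]. f_equal. field. lra. }
rewrite E. apply Rmult_le_compat_l; [left; apply Rpower_pos|].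
unfold Rpower. eapply Rle_trans; [|apply exp_ineq1_le].
pose proof (ln_le_sub1 (x / m) ltac:(apply Rdiv_lt_0_compat; lra)).
assert (- q * ln (x / m) >= - q * (x / m - 1)) by nra.
unfold Rdiv in *. lra.
Qed.

Lemma Ck_dx k f : Ck (S k) f -> Ck k (dx f).
Proof. intros H. apply H. Qed.
Lemma Ck_dy k f : Ck (S k) f -> Ck k (dy f).
Proof. intros H. apply H. Qed.

Theorem mainTheorem15 (q : R) (hq : 0 < q) :
  (exists u : R -> R -> R,
      Ck 4 u /\
      (forall x y, 0 < u x y) /\
      (forall x y, bilap u x y + Rpower (u x y) (- q) = 0)) ->
  1 < q.
Proof.
intros [u [Hu [Hpos Heq]]].
destruct (Rle_or_lt q 1) as [Hq1|Hq1]; [exfalso|exact Hq1].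
assert (Hu2 : Ck 2 u) by (apply Ck_mono; apply Ck_mono; exact Hu).
assert (Hl2 : Ck 2 (lap u)).
{ unfold lap. apply Ck_plus.
  - apply Ck_dx. apply Ck_dx. exact Hu.
  - apply Ck_dy. apply Ck_dy. exact Hu. }
assert (Hc0 : cont2 u) by (apply (Ck_S_cont 2); exact Hu2).
assert (Hcb : cont2 (bilap u)) by (apply cont2_lap; exact Hl2).
assert (HPI : 0 < 2 * PI) by (pose proof PI_RGT_0; lra).
assert (Gpos : forall r, 0 < G u r).
{ intro r. unfold G. apply RInt_gt_0; [exact HPI| |].
  - intros t _. apply Hpos.
  - intros t _. apply c2d_1d. apply pol_c2d. exact Hc0. }
apply (ode q (2 * PI) (2 * PI) (G u) (fun r => RInt (fun t => P1 u r t) 0 (2 * PI))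
   (G (lap u)) (fun r => RInt (fun t => P1 (lap u) r t) 0 (2 * PI)) (G (bilap u)) hq Hq1 HPI HPI).
- intro r. apply dG. apply Ck_mono. exact Hu2.
- intro r. eapply isd_ext_val; [|apply isd_tmul; apply dG1; exact Hu2].
  apply ident. exact Hu2.
- intro r. apply dG. apply Ck_mono. exact Hl2.
- intro r. eapply isd_ext_val; [|apply isd_tmul; apply dG1; exact Hl2].
  exact (ident (lap u) r Hl2).
- exact Gpos.
- intro r.
  set (m := G u r / (2 * PI)).
  assert (Hm : 0 < m) by (unfold m; apply Rdiv_lt_0_compat; [apply Gpos|exact HPI]).
  set (Aa := Rpower m (- q)).
  assert (HA : 0 < Aa) by apply Rpower_pos.
  assert (I1 : ex_RInt (fun t => pol (bilap u) r t) 0 (2 * PI)).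
  { apply exRInt2. intros; apply pol_c2d; exact Hcb. }
  assert (I2 : ex_RInt (fun t => - Aa * (1 + q) + Aa * q / m * pol u r t) 0 (2 * PI)).
  { apply (exRInt2 (fun z t => - Aa * (1 + q) + Aa * q / m * pol u z t)). intros.
    apply continuity_2d_pt_plus; [apply continuity_2d_pt_const|].
    apply continuity_2d_pt_mult; [apply continuity_2d_pt_const|apply pol_c2d; exact Hc0]. }
  assert (Le : G (bilap u) r <= RInt (fun t => - Aa * (1 + q) + Aa * q / m * pol u r t) 0 (2 * PI)).
  { unfold G. apply RInt_le; [lra|exact I1|exact I2|].
    intros t _. pose proof (Heq (r * cos t) (r * sin t)) as He.
    pose proof (tangent q (pol u r t) m hq (Hpos _ _) Hm) as Ht.
    unfold pol in *. fold Aa in Ht.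
    assert (Aa * (1 + q - q * u (r * cos t) (r * sin t) / m) = Aa * (1 + q) - Aa * q / m * u (r * cos t) (r * sin t)) by (field; lra).
    lra. }
  rewrite RInt_add in Le; [| apply (ex_RInt_const (V:=R_CompleteNormedModule)) |].
  2: { apply (exRInt2 (fun z t => Aa * q / m * pol u z t)). intros.
       apply continuity_2d_pt_mult; [apply continuity_2d_pt_const|apply pol_c2d; exact Hc0]. }
  rewrite RInt_cst in Le.
  rewrite RInt_mul_l in Le by (apply exRInt2; intros; apply pol_c2d; exact Hc0).
  fold (G u r) in Le.
  assert (Gm0 : forall g : R, g = g / (2 * PI) * (2 * PI)) by (intros; field; lra).
  pose proof (Gm0 (G u r)) as Gm. fold m in Gm.
  change (RInt (pol u r) 0 (2 * PI)) with (G u r) in Le.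
  rewrite Gm in Le. fold Aa.
  assert (Aa * q / m * (m * (2 * PI)) = Aa * q * (2 * PI)) by (field; lra).
  lra.
Qed.
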